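(* Let $F_1,F_2$ be continuous cumulative distribution functions of nonnegative random variables with the same finite mean $\mu>0$, each strictly increasing on the set where it lies strictly between $0$ and $1$, with Lorenz curves $LC_1,LC_2$. Suppose $LC_1(p)\ge LC_2(p)$ for all $p\in[0,1]$. Let $m>1$ and $0<r<m\mu$, and for $i=1,2$ let $\tau_i$ solve $m\int_0^{\tau_i}x\,dF_i(x)=r$ and $\theta_i$ solve $\int_{\theta_i}^\infty x\,dF_i(x)=r/m$. Then $$F_1(\tau_1)\le F_2(\tau_2)\quad\text{and}\quad 1-F_1(\theta_1)\ge 1-F_2(\theta_2).$$ Consequently the sets $\{m>1: 1/m<1-F_i(\theta_i)\}$ and $\{m>1: 1/m>F_i(\tau_i)\}$ (with $r,\mu$ fixed and $\tau_i,\theta_i$ depending on $m$) are each larger (in the sense of inclusion) for $i=1$ than for $i=2$.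
   Context: The Lorenz curve of a distribution $F$ with mean $\mu$ is $LC(p)=\frac{1}{\mu}\int_0^p F^{-1}(t)\,dt$, $p\in[0,1]$, with $F^{-1}$ the quantile function. Interpretation: $1/m<1-F(\theta)$ means the strongest-first society can survive (hence every society form can), and $1/m>F(\tau)$ means the weakest-first society dies out almost surely (hence every society form does), in the resource dependent branching process model with mean offspring $m$ and mean individual production $r$. *)

(* Defs.v *)
From Stdlib Require Import Reals Lra.
Open Scope R_scope.

Fixpoint sum_upto (g : nat -> R) (n : nat) : R :=
  match n with
  | O => 0
  | S k => sum_upto g k + g k
  end.

Definition tagged_partition (a b : R) (n : nat) (x xi : nat -> R) : Prop :=
  x O = a /\ x n = b /\
  (forall i, (i < n)%nat -> x i < x (S i)) /\
  (forall i, (i < n)%nat -> x i <= xi i <= x (S i)).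

Definition mesh_lt (n : nat) (x : nat -> R) (delta : R) : Prop :=
  forall i, (i < n)%nat -> x (S i) - x i < delta.

Definition RS_sum (f G : R -> R) (n : nat) (x xi : nat -> R) : R :=
  sum_upto (fun i => f (xi i) * (G (x (S i)) - G (x i))) n.

Definition RS_int (f G : R -> R) (a b I : R) : Prop :=
  a <= b /\
  forall eps, eps > 0 -> exists delta, delta > 0 /\
    forall n x xi, tagged_partition a b n x xi -> mesh_lt n x delta ->
      Rabs (RS_sum f G n x xi - I) < eps.

Definition RS_int_infty (f G : R -> R) (a J : R) : Prop :=
  exists Ib : R -> R,
    (forall b, a <= b -> RS_int f G a b (Ib b)) /\
    (forall eps, eps > 0 -> exists M, forall b, b >= M -> a <= b ->
        Rabs (Ib b - J) < eps).

Definition cont_cdf_nonneg (F : R -> R) : Prop :=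
  (forall x y, x <= y -> F x <= F y) /\
  (forall x, continuity_pt F x) /\
  (forall x, x < 0 -> F x = 0) /\
  (forall eps, eps > 0 -> exists M, forall x, x >= M -> Rabs (F x - 1) < eps).

Definition strict_incr_on_interior (F : R -> R) : Prop :=
  forall x y, x < y -> 0 < F x < 1 -> 0 < F y < 1 -> F x < F y.

Definition is_glb (E : R -> Prop) (m : R) : Prop :=
  (forall x, E x -> m <= x) /\ (forall b, (forall x, E x -> b <= x) -> b <= m).

Definition is_quantile (F Q : R -> R) : Prop :=
  forall t, 0 < t < 1 -> is_glb (fun x => t <= F x) (Q t).

(* LC is the Lorenz curve of F (mean mu) on [0,1]:
   LC p = (1/mu) int_0^p F^{-1}(t) dt, the integral being proper for p < 1
   and improper (limit p -> 1^-) at p = 1. *)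
Definition is_Lorenz_curve (F : R -> R) (mu : R) (LC : R -> R) : Prop :=
  forall Q, is_quantile F Q ->
    (forall p, 0 <= p < 1 -> RS_int Q (fun t => t) 0 p (mu * LC p)) /\
    (forall eps, eps > 0 -> exists delta, delta > 0 /\
        forall p, 1 - delta < p < 1 -> Rabs (LC p - LC 1) < eps).

(* Main.v *)
Require Import Defs.
From Stdlib Require Import Reals Lra Lia Rtopology ClassicalEpsilon.
Open Scope R_scope.

Lemma sum_ext : forall g h n, (forall i, (i < n)%nat -> g i = h i) -> sum_upto g n = sum_upto h n.
Proof. intros g h n; induction n; intros H; simpl; auto.
  rewrite IHn by (intros; apply H; lia). rewrite H by lia. auto. Qed.

Lemma sum_split : forall g n1 n2, sum_upto g (n1 + n2) = sum_upto g n1 + sum_upto (fun k => g (n1 + k)%nat) n2.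
Proof. intros g n1 n2; induction n2; simpl.
  - rewrite Nat.add_0_r; lra.
  - rewrite Nat.add_succ_r; simpl; rewrite IHn2; lra. Qed.

Lemma sum_zero : forall g n, (forall i, (i < n)%nat -> g i = 0) -> sum_upto g n = 0.
Proof. intros g n; induction n; intros H; simpl; auto. rewrite IHn by (intros; apply H; lia). rewrite H by lia; lra. Qed.

Lemma sum_le : forall g h n, (forall i, (i < n)%nat -> g i <= h i) -> sum_upto g n <= sum_upto h n.
Proof. intros g h n; induction n; intros H; simpl; [lra|].
  assert (sum_upto g n <= sum_upto h n) by (apply IHn; intros; apply H; lia).
  assert (g n <= h n) by (apply H; lia). lra. Qed.

Lemma sum_tele : forall x n, sum_upto (fun i => x (S i) - x i) n = x n - x O.
Proof. intros x n; induction n; simpl; [lra|]. rewrite IHn; lra. Qed.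

Lemma sum_scal : forall c g n, sum_upto (fun i => c * g i) n = c * sum_upto g n.
Proof. intros c g n; induction n; simpl; [lra|]. rewrite IHn; lra. Qed.

Lemma part_mono : forall a b n x xi, tagged_partition a b n x xi ->
  forall i j, (i < j)%nat -> (j <= n)%nat -> x i < x j.
Proof. intros a b n x xi [H0 [H1 [H2 H3]]] i j Hij; induction Hij; intros Hj.
  - apply H2; lia.
  - apply Rlt_trans with (x m). apply IHHij; lia. apply H2; lia. Qed.

Lemma part_bounds : forall a b n x xi, tagged_partition a b n x xi ->
  forall i, (i <= n)%nat -> a <= x i <= b.
Proof. intros a b n x xi H i Hi. pose proof H as [H0 [H1 _]].
  destruct (Nat.eq_dec i 0) as [->|Hi0]. rewrite H0; split; [lra|].
  destruct (Nat.eq_dec n 0) as [->|]. rewrite H0 in H1; lra. left; rewrite <- H1, <- H0; apply (part_mono _ _ _ _ _ H); lia.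
  split. left; rewrite <- H0; apply (part_mono _ _ _ _ _ H); lia.
  destruct (Nat.eq_dec i n) as [->|]. lra. left; rewrite <- H1; apply (part_mono _ _ _ _ _ H); lia. Qed.

Lemma part_ab : forall a b n x xi, tagged_partition a b n x xi -> a <= b.
Proof. intros. pose proof (part_bounds _ _ _ _ _ H 0 ltac:(lia)). lra. Qed.

Lemma unif_part : forall c d delta, c <= d -> delta > 0 ->
  exists n x, tagged_partition c d n x (fun i => x (S i)) /\ mesh_lt n x delta.
Proof. intros c d delta Hcd Hd. destruct (Req_dec c d) as [<-|Hne].
  - exists O, (fun _ => c). split; [|intros i Hi; lia].
    repeat split; auto; intros; lia.
  - destruct (INR_archimed delta (d - c) Hd) as [N HN].
    assert (HN0 : (0 < N)%nat). { destruct N; [simpl in HN; lra|lia]. }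
    assert (HNr : 0 < INR N) by (apply lt_0_INR; auto).
    set (h := (d - c) / INR N).
    assert (Hh : 0 < h) by (unfold h; apply Rdiv_lt_0_compat; lra).
    assert (Hhd : h < delta). { unfold h. apply Rmult_lt_reg_r with (INR N); auto.
      unfold Rdiv; rewrite Rmult_assoc, Rinv_l by lra. lra. }
    exists N, (fun i => c + INR i * h).
    assert (Hstep : forall i, c + INR (S i) * h - (c + INR i * h) = h) by (intro; rewrite S_INR; lra).
    split; [|intros i Hi; rewrite Hstep; auto].
    split; [|split; [|split]].
    + simpl; lra.
    + unfold h; field; lra.
    + intros i Hi; pose proof (Hstep i); lra.
    + intros i Hi; pose proof (Hstep i); lra.
Qed.

Definition cat_x (n1 : nat) (x1 x2 : nat -> R) (k : nat) : R :=
  if Nat.ltb k n1 then x1 k else x2 (k - n1)%nat.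

Lemma cat_part : forall f G a c b n1 x1 xi1 n2 x2 xi2 delta,
  tagged_partition a c n1 x1 xi1 -> tagged_partition c b n2 x2 xi2 ->
  mesh_lt n1 x1 delta -> mesh_lt n2 x2 delta ->
  tagged_partition a b (n1 + n2) (cat_x n1 x1 x2) (cat_x n1 xi1 xi2) /\
  mesh_lt (n1 + n2) (cat_x n1 x1 x2) delta /\
  RS_sum f G (n1 + n2) (cat_x n1 x1 x2) (cat_x n1 xi1 xi2) =
  RS_sum f G n1 x1 xi1 + RS_sum f G n2 x2 xi2.
Proof.
  intros f G a c b n1 x1 xi1 n2 x2 xi2 delta P1 P2 M1 M2.
  pose proof P1 as [A0 [A1 [A2 A3]]]. pose proof P2 as [B0 [B1 [B2 B3]]].
  assert (E1 : forall k, (k <= n1)%nat -> cat_x n1 x1 x2 k = x1 k).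
  { intros k Hk; unfold cat_x. destruct (Nat.ltb_spec k n1). auto.
    replace k with n1 by lia. rewrite Nat.sub_diag, B0, A1; auto. }
  assert (E2 : forall k, cat_x n1 x1 x2 (n1 + k) = x2 k).
  { intros k; unfold cat_x. destruct (Nat.ltb_spec (n1+k) n1). lia. f_equal; lia. }
  assert (E3 : forall k, (k < n1)%nat -> cat_x n1 xi1 xi2 k = xi1 k).
  { intros k Hk; unfold cat_x. destruct (Nat.ltb_spec k n1). auto. lia. }
  assert (E4 : forall k, cat_x n1 xi1 xi2 (n1 + k) = xi2 k).
  { intros k; unfold cat_x. destruct (Nat.ltb_spec (n1+k) n1). lia. f_equal; lia. }
  assert (Split : forall i, (i < n1 + n2)%nat -> (i < n1 /\ S i <= n1)%nat \/ exists k, i = (n1 + k)%nat /\ (k < n2)%nat).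
  { intros i Hi. destruct (Nat.ltb_spec i n1). left; lia. right; exists (i - n1)%nat; lia. }
  split; [|split].
  - split; [|split; [|split]].
    + rewrite E1 by lia; auto.
    + rewrite E2; auto.
    + intros i Hi; destruct (Split i Hi) as [[H H']|[k [-> Hk]]].
      * rewrite !E1 by lia; apply A2; auto.
      * rewrite <- Nat.add_succ_r, !E2; apply B2; auto.
    + intros i Hi; destruct (Split i Hi) as [[H H']|[k [-> Hk]]].
      * rewrite !E1, E3 by lia; apply A3; auto.
      * rewrite <- Nat.add_succ_r, !E2, E4; apply B3; auto.
  - intros i Hi; destruct (Split i Hi) as [[H H']|[k [-> Hk]]].
    * rewrite !E1 by lia; apply M1; auto.
    * rewrite <- Nat.add_succ_r, !E2; apply M2; auto.
  - unfold RS_sum. rewrite sum_split. f_equal.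
    + apply sum_ext; intros i Hi. rewrite !E1, E3 by lia; auto.
    + apply sum_ext; intros i Hi. rewrite <- Nat.add_succ_r, !E2, E4; auto.
Qed.

Lemma const_zero : forall f G c d n x xi, tagged_partition c d n x xi ->
  (forall y, c <= y <= d -> G y = G c) -> RS_sum f G n x xi = 0.
Proof. intros f G c d n x xi P HG. unfold RS_sum; apply sum_zero; intros i Hi.
  rewrite (HG (x (S i))), (HG (x i)); [ring| |]; apply (part_bounds _ _ _ _ _ P); lia. Qed.

Lemma eps_eq : forall A B, (forall eps, eps > 0 -> Rabs (A - B) < eps) -> A = B.
Proof. intros A B H. destruct (Req_dec A B); auto.
  assert (Rabs (A - B) > 0) by (apply Rabs_pos_lt; lra).
  specialize (H _ H1). lra. Qed.

Lemma RS_add : forall f G a c b I1 I2 I, RS_int f G a c I1 -> RS_int f G c b I2 ->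
  RS_int f G a b I -> I = I1 + I2.
Proof. intros f G a c b I1 I2 I [Hac H1] [Hcb H2] [Hab H].
  apply eps_eq; intros eps He.
  destruct (H1 (eps/3)) as [d1 [Hd1 K1]]; [lra|].
  destruct (H2 (eps/3)) as [d2 [Hd2 K2]]; [lra|].
  destruct (H (eps/3)) as [d [Hd K]]; [lra|].
  set (dm := Rmin d (Rmin d1 d2)).
  assert (dm > 0) by (unfold dm; repeat apply Rmin_pos; lra).
  assert (dm <= d /\ dm <= d1 /\ dm <= d2) as [Q1 [Q2 Q3]].
  { unfold dm; pose proof (Rmin_l d (Rmin d1 d2)); pose proof (Rmin_r d (Rmin d1 d2));
    pose proof (Rmin_l d1 d2); pose proof (Rmin_r d1 d2); lra. }
  destruct (unif_part a c dm Hac H0) as [n1 [x1 [P1 M1]]].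
  destruct (unif_part c b dm Hcb H0) as [n2 [x2 [P2 M2]]].
  destruct (cat_part f G a c b _ _ _ _ _ _ dm P1 P2 M1 M2) as [P [M E]].
  assert (mesh_lt n1 x1 d1) by (intros i Hi; specialize (M1 i Hi); lra).
  assert (mesh_lt n2 x2 d2) by (intros i Hi; specialize (M2 i Hi); lra).
  assert (mesh_lt (n1+n2) (cat_x n1 x1 x2) d) by (intros i Hi; specialize (M i Hi); lra).
  specialize (K1 _ _ _ P1 H3). specialize (K2 _ _ _ P2 H4). specialize (K _ _ _ P H5).
  rewrite E in K. apply Rabs_def2 in K1, K2, K. apply Rabs_def1; lra.
Qed.

Lemma RS_uniq : forall f G a b I1 I2, RS_int f G a b I1 -> RS_int f G a b I2 -> I1 = I2.
Proof. intros f G a b I1 I2 [Hab H1] [_ H2]. apply eps_eq; intros eps He.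
  destruct (H1 (eps/2)) as [d1 [Hd1 K1]]; [lra|].
  destruct (H2 (eps/2)) as [d2 [Hd2 K2]]; [lra|].
  assert (Rmin d1 d2 > 0) by (apply Rmin_pos; lra).
  destruct (unif_part a b _ Hab H) as [n [x [P M]]].
  assert (mesh_lt n x d1) by (intros i Hi; specialize (M i Hi); pose proof (Rmin_l d1 d2); lra).
  assert (mesh_lt n x d2) by (intros i Hi; specialize (M i Hi); pose proof (Rmin_r d1 d2); lra).
  specialize (K1 _ _ _ P H0). specialize (K2 _ _ _ P H3).
  apply Rabs_def2 in K1, K2. apply Rabs_def1; lra. Qed.

Lemma RS_const : forall f G c d, c <= d -> (forall y, c <= y <= d -> G y = G c) -> RS_int f G c d 0.
Proof. intros f G c d Hcd HG. split; auto. intros eps He. exists 1; split; [lra|].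
  intros n x xi P M. rewrite (const_zero f G c d n x xi P HG). rewrite Rminus_0_r, Rabs_R0; lra. Qed.

Lemma lim_eq : forall (I1 I2 : R -> R) a1 a2 c L1 L2 K,
  (forall eps, eps > 0 -> exists M, forall b, b >= M -> a1 <= b -> Rabs (I1 b - L1) < eps) ->
  (forall eps, eps > 0 -> exists M, forall b, b >= M -> a2 <= b -> Rabs (I2 b - L2) < eps) ->
  (forall b, b >= c -> I1 b = I2 b + K) -> L1 = L2 + K.
Proof. intros I1 I2 a1 a2 c L1 L2 K H1 H2 H. apply eps_eq; intros eps He.
  destruct (H1 (eps/2)) as [M1 K1]; [lra|]. destruct (H2 (eps/2)) as [M2 K2]; [lra|].
  set (b := Rmax (Rmax M1 M2) (Rmax c (Rmax a1 a2))).
  assert (Rmax M1 M2 <= b /\ Rmax c (Rmax a1 a2) <= b) as [Q1 Q2] by (split; [apply Rmax_l|apply Rmax_r]).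
  pose proof (Rmax_l M1 M2). pose proof (Rmax_r M1 M2). pose proof (Rmax_l c (Rmax a1 a2)).
  pose proof (Rmax_r c (Rmax a1 a2)). pose proof (Rmax_l a1 a2). pose proof (Rmax_r a1 a2).
  specialize (K1 b ltac:(lra) ltac:(lra)). specialize (K2 b ltac:(lra) ltac:(lra)).
  rewrite H in K1 by lra. apply Rabs_def2 in K1, K2. apply Rabs_def1; lra. Qed.

Lemma cont_eps : forall f x0 eps, continuity_pt f x0 -> eps > 0 ->
  exists d, d > 0 /\ forall x, Rabs (x - x0) < d -> Rabs (f x - f x0) < eps.
Proof. intros f x0 eps H He. unfold continuity_pt, continue_in, limit1_in, limit_in in H.
  destruct (H eps He) as [d [Hd K]]. exists d; split; auto. intros x Hx.
  destruct (Req_dec x x0) as [->|]. rewrite Rminus_diag, Rabs_R0; lra.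
  apply (K x). split. unfold D_x, no_cond; auto. simpl; unfold R_dist; auto. Qed.

Section CDF.
Variable F : R -> R.
Hypothesis HF : cont_cdf_nonneg F.

Lemma F_nonneg : forall x, 0 <= F x.
Proof. destruct HF as [Hm [_ [H0 _]]]. intro x.
  rewrite <- (H0 (Rmin x (-1))) by (pose proof (Rmin_r x (-1)); lra). apply Hm, Rmin_l. Qed.

Lemma F_le1 : forall x, F x <= 1.
Proof. destruct HF as [Hm [_ [_ Hl]]]. intro x. destruct (Rle_lt_dec (F x) 1); auto.
  destruct (Hl (F x - 1)) as [M HM]; [lra|].
  specialize (HM (Rmax M x) (Rle_ge _ _ (Rmax_l M x))).
  pose proof (Hm x (Rmax M x) (Rmax_r M x)). apply Rabs_def2 in HM. lra. Qed.

Lemma F_0 : F 0 = 0.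
Proof. destruct HF as [Hm [Hc [H0 _]]]. pose proof (F_nonneg 0).
  destruct (Req_dec (F 0) 0); auto.
  destruct (cont_eps F 0 (F 0) (Hc 0)) as [d [Hd K]]; [lra|].
  specialize (K (- d/2)). rewrite H0 in K by lra.
  assert (Rabs (0 - F 0) = F 0) by (rewrite Rabs_minus_sym, Rminus_0_r, Rabs_pos_eq; lra).
  rewrite H2 in K. assert (Rabs (- d / 2 - 0) < d) by (rewrite Rabs_left; lra).
  specialize (K H3). lra. Qed.

Variable Q : R -> R.
Hypothesis HQ : is_quantile F Q.

Lemma Q_pos : forall t, 0 < t < 1 -> Q t > 0.
Proof. intros t Ht. destruct HF as [Hm [Hc [H0 _]]].
  destruct (cont_eps F 0 t (Hc 0)) as [d [Hd K]]; [lra|].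
  destruct (HQ t Ht) as [_ G]. assert (d <= Q t); [|lra].
  apply G. intros x Hx. destruct (Rle_lt_dec d x); auto.
  destruct (Rlt_le_dec x 0). rewrite H0 in Hx; lra.
  specialize (K x). rewrite F_0, Rminus_0_r, Rminus_0_r in K.
  pose proof (F_nonneg x). rewrite (Rabs_pos_eq x), (Rabs_pos_eq (F x)) in K by lra.
  specialize (K ltac:(lra)). lra. Qed.

Lemma Q_mono : forall t t', 0 < t -> t <= t' -> t' < 1 -> Q t <= Q t'.
Proof. intros t t' H1 H2 H3. destruct (HQ t ltac:(lra)) as [L1 _].
  destruct (HQ t' ltac:(lra)) as [_ G2]. apply G2. intros x Hx. apply L1. lra. Qed.

Hypothesis HS : strict_incr_on_interior F.

Lemma Q_F : forall x, 0 < F x < 1 -> Q (F x) = x.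
Proof. intros x Hx. destruct (HQ (F x) Hx) as [L G]. apply Rle_antisym.
  - apply L; lra.
  - apply G. intros y Hy. destruct (Rle_lt_dec x y); auto.
    pose proof (F_nonneg y). destruct (Req_dec (F y) 0). lra.
    destruct HF as [Hm _]. pose proof (Hm y x ltac:(lra)).
    assert (F y < F x) by (apply HS; auto; lra). lra. Qed.

End CDF.

Lemma quant_exists : forall F, cont_cdf_nonneg F -> exists Q, is_quantile F Q.
Proof. intros F HF.
  assert (H : forall t, exists m, 0 < t < 1 -> is_glb (fun x => t <= F x) m).
  { intro t. destruct (Rlt_dec 0 t) as [Ht0|Ht0]; [|exists 0; intros; lra].
    destruct (Rlt_dec t 1) as [Ht1|Ht1]; [|exists 0; intros; lra].
    set (E := fun y => t <= F (- y)).
    assert (Hb : bound E).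
    { exists 0. intros y Hy. unfold E in Hy. destruct (Rle_lt_dec y 0); auto.
      destruct HF as [_ [_ [H0 _]]]. rewrite H0 in Hy by lra. lra. }
    assert (Hne : exists y, E y).
    { destruct HF as [_ [_ [_ Hl]]]. destruct (Hl (1 - t)) as [M HM]; [lra|].
      exists (- M). unfold E. rewrite Ropp_involutive. specialize (HM M (Rge_refl M)).
      apply Rabs_def2 in HM. lra. }
    destruct (completeness E Hb Hne) as [s [Hs1 Hs2]].
    exists (- s). intros _. split.
    - intros x Hx. assert (E (- x)) by (unfold E; rewrite Ropp_involutive; auto).
      specialize (Hs1 _ H). lra.
    - intros b Hb'. assert (s <= - b); [|lra]. apply Hs2. intros y Hy. unfold E in Hy.
      specialize (Hb' _ Hy). lra. }
  exists (fun t => proj1_sig (constructive_indefinite_description _ (H t))).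
  intros t Ht. destruct (constructive_indefinite_description _ (H t)) as [m Hm]; simpl; auto.
Qed.

Lemma core : forall F Q tau d1 d2, cont_cdf_nonneg F -> strict_incr_on_interior F ->
  is_quantile F Q -> 0 < F tau < 1 -> d1 > 0 -> d2 > 0 ->
  exists n t eta n' x xi, tagged_partition 0 (F tau) n t eta /\ mesh_lt n t d1 /\
    tagged_partition 0 tau n' x xi /\ mesh_lt n' x d2 /\
    RS_sum Q (fun t => t) n t eta = RS_sum (fun x => x) F n' x xi.
Proof.
  intros F Q tau d1 d2 HF HS HQ Ht Hd1 Hd2.
  pose proof HF as [Hm [Hc [H0 _]]].
  pose proof (F_0 F HF) as HF0.
  assert (Htau : 0 < tau).
  { destruct (Rlt_le_dec 0 tau); auto. pose proof (Hm _ _ r). lra. }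
  set (E := fun x => x <= tau /\ F x = 0).
  assert (Hb : bound E) by (exists tau; intros x [Hx _]; auto).
  assert (Hne : exists x, E x) by (exists 0; split; [lra|auto]).
  destruct (completeness E Hb Hne) as [a [Ha1 Ha2]].
  assert (Ha0 : 0 <= a) by (apply Ha1; split; [lra|auto]).
  assert (Hat : a <= tau) by (apply Ha2; intros x [Hx _]; auto).
  assert (HFa : F a = 0).
  { pose proof (F_nonneg F HF a). destruct (Req_dec (F a) 0); auto.
    destruct (cont_eps F a (F a) (Hc a)) as [d [Hd K]]; [lra|].
    assert (a <= a - d); [|lra]. apply Ha2. intros x [Hx Hx0].
    destruct (Rle_lt_dec x (a - d)); auto.
    assert (x <= a) by (apply Ha1; split; auto).
    specialize (K x ltac:(apply Rabs_def1; lra)). rewrite Hx0 in K.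
    apply Rabs_def2 in K. lra. }
  assert (Hpos : forall x, a < x -> F x > 0).
  { intros x Hx. pose proof (F_nonneg F HF x). destruct (Req_dec (F x) 0); [|lra].
    destruct (Rle_lt_dec x tau). assert (x <= a) by (apply Ha1; split; auto). lra.
    pose proof (Hm tau x ltac:(lra)). lra. }
  assert (Hat' : a < tau) by (destruct (Req_dec a tau); [subst; lra|lra]).
  destruct (Heine F (fun c => a <= c <= tau) (compact_P3 a tau) (fun x _ => Hc x)
     (mkposreal d1 Hd1)) as [[dl Hdl] Hu]. simpl in Hu.
  assert (Hmin : Rmin d2 dl > 0) by (apply Rmin_pos; lra).
  destruct (unif_part a tau _ (Rlt_le _ _ Hat') Hmin) as [n [xs [P M]]].
  destruct (unif_part 0 a d2 Ha0 Hd2) as [n0 [x0 [P0 M0]]].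
  assert (M' : mesh_lt n xs d2) by (intros i Hi; specialize (M i Hi); pose proof (Rmin_l d2 dl); lra).
  destruct (cat_part (fun x => x) F 0 a tau _ _ _ _ _ _ d2 P0 P M0 M') as [PC [MC EC]].
  assert (Hxs : forall j, (j <= n)%nat -> a <= xs j <= tau) by (apply (part_bounds _ _ _ _ _ P)).
  assert (Hxs' : forall j, (j < n)%nat -> a < xs (S j)).
  { intros j Hj. pose proof P as [P1 _]. rewrite <- P1. apply (part_mono _ _ _ _ _ P); lia. }
  pose proof P as [Pa [Pb [Pc Pd]]].
  assert (Hinc : forall j, (j < n)%nat -> F (xs j) < F (xs (S j))).
  { intros j Hj. pose proof (Hxs' j Hj) as G1. pose proof (Hpos _ G1). pose proof (Hxs j ltac:(lia)) as G3.
    pose proof (Hxs (S j) ltac:(lia)) as G4. pose proof (Hm _ _ (proj2 G3)). pose proof (Hm _ _ (proj2 G4)).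
    pose proof (F_nonneg F HF (xs j)). destruct (Req_dec (F (xs j)) 0). lra.
    apply HS; [apply Pc; auto|lra|lra]. }
  exists n, (fun j => F (xs j)), (fun j => F (xs (S j))), (n0 + n)%nat,
    (cat_x n0 x0 xs), (cat_x n0 (fun i => x0 (S i)) (fun i => xs (S i))).
  split; [|split; [|split; [|split]]]; auto.
  - split; [|split; [|split]].
    + rewrite Pa; auto.
    + rewrite Pb; auto.
    + auto.
    + intros j Hj; pose proof (Hinc j Hj); lra.
  - intros j Hj. pose proof (Hxs j ltac:(lia)). pose proof (Hxs (S j) ltac:(lia)).
    specialize (M j Hj). pose proof (Rmin_r d2 dl). pose proof (Hinc j Hj). pose proof (Pc j Hj).
    specialize (Hu (xs (S j)) (xs j) H1 H). rewrite Rabs_pos_eq in Hu by lra.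
    specialize (Hu ltac:(lra)). rewrite Rabs_pos_eq in Hu by lra. auto.
  - rewrite EC. rewrite (const_zero _ F 0 a n0 x0 _ P0).
    + rewrite Rplus_0_l. unfold RS_sum. apply sum_ext. intros j Hj.
      rewrite (Q_F F HF Q HQ HS); auto. pose proof (Hxs' j Hj). pose proof (Hpos _ H).
      pose proof (Hxs (S j) ltac:(lia)). pose proof (Hm _ _ (proj2 H2)). lra.
    + intros y Hy. pose proof (Hm _ _ (proj2 Hy)). pose proof (F_nonneg F HF y). lra.
Qed.

Lemma tau_lemma : forall F Q tau K J, cont_cdf_nonneg F -> strict_incr_on_interior F ->
  is_quantile F Q -> 0 < F tau < 1 ->
  RS_int Q (fun t => t) 0 (F tau) K -> RS_int (fun x => x) F 0 tau J -> K = J.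
Proof. intros F Q tau K J HF HS HQ Ht [_ HK] [_ HJ]. apply eps_eq; intros eps He.
  destruct (HK (eps/2)) as [d1 [Hd1 K1]]; [lra|].
  destruct (HJ (eps/2)) as [d2 [Hd2 K2]]; [lra|].
  destruct (core F Q tau d1 d2 HF HS HQ Ht Hd1 Hd2) as [n [t [eta [n' [x [xi [P1 [M1 [P2 [M2 Eq]]]]]]]]]].
  specialize (K1 _ _ _ P1 M1). specialize (K2 _ _ _ P2 M2). rewrite Eq in K1.
  apply Rabs_def2 in K1, K2. apply Rabs_def1; lra. Qed.

Lemma theta_lemma : forall F Q th K I0 Ith b, cont_cdf_nonneg F -> strict_incr_on_interior F ->
  is_quantile F Q -> 0 < F th < 1 -> th <= b ->
  RS_int Q (fun t => t) 0 (F th) K -> RS_int (fun x => x) F 0 b I0 ->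
  RS_int (fun x => x) F th b Ith -> K = I0 - Ith.
Proof. intros F Q th K I0 Ith b HF HS HQ Ht Hb [_ HK] [_ H0] [_ Hth]. apply eps_eq; intros eps He.
  destruct (HK (eps/3)) as [d1 [Hd1 K1]]; [lra|].
  destruct (H0 (eps/3)) as [d2 [Hd2 K2]]; [lra|].
  destruct (Hth (eps/3)) as [d3 [Hd3 K3]]; [lra|].
  assert (Hm : Rmin d2 d3 > 0) by (apply Rmin_pos; lra).
  pose proof (Rmin_l d2 d3). pose proof (Rmin_r d2 d3).
  destruct (core F Q th d1 _ HF HS HQ Ht Hd1 Hm) as [n [t [eta [n' [x [xi [P1 [M1 [P2 [M2 Eq]]]]]]]]]].
  destruct (unif_part th b _ Hb Hm) as [n3 [x3 [P3 M3]]].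
  destruct (cat_part (fun x => x) F 0 th b _ _ _ _ _ _ _ P2 P3 M2 M3) as [PC [MC EC]].
  specialize (K1 _ _ _ P1 M1).
  assert (N1 : mesh_lt n3 x3 d3) by (intros i Hi; specialize (M3 i Hi); lra).
  assert (N2 : mesh_lt (n' + n3) (cat_x n' x x3) d2) by (intros i Hi; specialize (MC i Hi); lra).
  specialize (K3 _ _ _ P3 N1). specialize (K2 _ _ _ PC N2). rewrite EC in K2. rewrite Eq in K1.
  apply Rabs_def2 in K1, K2, K3. apply Rabs_def1; lra. Qed.

Lemma Qint_strict : forall F Q p1 p2 K1 K2, cont_cdf_nonneg F -> is_quantile F Q ->
  0 < p2 -> p2 < p1 -> p1 < 1 ->
  RS_int Q (fun t => t) 0 p2 K2 -> RS_int Q (fun t => t) 0 p1 K1 -> K2 < K1.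
Proof. intros F Q p1 p2 K1 K2 HF HQ H1 H2 H3 [_ HK2] [_ HK1].
  set (c := Q p2). assert (Hc : c > 0) by (apply (Q_pos F HF Q HQ); lra).
  set (eps := c * (p1 - p2) / 4). assert (He : eps > 0) by (unfold eps; apply Rmult_lt_0_compat; [apply Rmult_lt_0_compat|]; lra).
  destruct (HK1 eps He) as [d1 [Hd1 L1]]. destruct (HK2 eps He) as [d2 [Hd2 L2]].
  assert (Hm : Rmin d1 d2 > 0) by (apply Rmin_pos; lra).
  pose proof (Rmin_l d1 d2). pose proof (Rmin_r d1 d2).
  destruct (unif_part 0 p2 _ ltac:(lra) Hm) as [n1 [x1 [P1 M1]]].
  destruct (unif_part p2 p1 _ ltac:(lra) Hm) as [n2 [x2 [P2 M2]]].
  destruct (cat_part Q (fun t => t) 0 p2 p1 _ _ _ _ _ _ _ P1 P2 M1 M2) as [PC [MC EC]].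
  assert (N1 : mesh_lt n1 x1 d2) by (intros i Hi; specialize (M1 i Hi); lra).
  assert (N2 : mesh_lt (n1 + n2) (cat_x n1 x1 x2) d1) by (intros i Hi; specialize (MC i Hi); lra).
  specialize (L1 _ _ _ PC N2). specialize (L2 _ _ _ P1 N1). rewrite EC in L1.
  assert (S2 : RS_sum Q (fun t => t) n2 x2 (fun i => x2 (S i)) >= c * (p1 - p2)).
  { unfold RS_sum. pose proof P2 as [A0 [A1 _]].
    replace (c * (p1 - p2)) with (c * (x2 n2 - x2 O)) by (rewrite A0, A1; auto).
    rewrite <- sum_tele, <- sum_scal. apply Rle_ge, sum_le.
    intros i Hi. pose proof (part_bounds _ _ _ _ _ P2 (S i) ltac:(lia)).
    pose proof P2 as [_ [_ [A2 _]]]. specialize (A2 i Hi).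
    apply Rmult_le_compat_r; [lra|]. unfold c. apply (Q_mono F Q HQ); lra. }
  apply Rabs_def2 in L1, L2. unfold eps in *. lra. Qed.

Lemma tau_part : forall F Q LC mu tau v, cont_cdf_nonneg F -> strict_incr_on_interior F ->
  is_quantile F Q -> (forall p, 0 <= p < 1 -> RS_int Q (fun t => t) 0 p (mu * LC p)) ->
  RS_int_infty (fun x => x) F 0 mu -> RS_int (fun x => x) F 0 tau v -> 0 < v -> v < mu ->
  0 < F tau < 1 /\ mu * LC (F tau) = v.
Proof. intros F Q LC mu tau v HF HS HQ HL [Ib [HI HIl]] Hv Hv0 Hvm.
  pose proof HF as [Hm _]. pose proof (F_0 F HF) as F0.
  pose proof Hv as [Ht _]. pose proof (F_nonneg F HF tau). pose proof (F_le1 F HF tau).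
  destruct (Req_dec (F tau) 0) as [E0|E0].
  { assert (RS_int (fun x => x) F 0 tau 0).
    { apply RS_const; auto. intros y Hy. pose proof (Hm _ _ (proj2 Hy)). pose proof (F_nonneg F HF y). lra. }
    pose proof (RS_uniq _ _ _ _ _ _ Hv H1). lra. }
  destruct (Req_dec (F tau) 1) as [E1|E1].
  { assert (mu = 0 + v); [|lra].
    apply (lim_eq Ib (fun _ => 0) 0 0 tau mu 0 v HIl).
    - intros eps He; exists 0; intros; rewrite Rminus_0_r, Rabs_R0; lra.
    - intros b Hb. assert (RS_int (fun x => x) F tau b 0).
      { apply RS_const; [lra|]. intros y Hy. pose proof (Hm _ _ (proj1 Hy)). pose proof (F_le1 F HF y). lra. }
      pose proof (RS_add _ _ _ _ _ _ _ _ Hv H1 (HI b ltac:(lra))). lra. }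
  assert (Hi : 0 < F tau < 1) by lra. split; auto.
  apply (tau_lemma F Q tau _ v HF HS HQ Hi); auto. apply HL; lra. Qed.

Lemma theta_part : forall F Q LC mu th v, cont_cdf_nonneg F -> strict_incr_on_interior F ->
  is_quantile F Q -> (forall p, 0 <= p < 1 -> RS_int Q (fun t => t) 0 p (mu * LC p)) ->
  RS_int_infty (fun x => x) F 0 mu -> RS_int_infty (fun x => x) F th v -> 0 < v -> v < mu ->
  0 < F th < 1 /\ mu * LC (F th) = mu - v.
Proof. intros F Q LC mu th v HF HS HQ HL [Ib [HI HIl]] [Jb [HJ HJl]] Hv0 Hvm.
  pose proof HF as [Hm [_ [H0 _]]]. pose proof (F_0 F HF) as F0.
  pose proof (F_nonneg F HF th). pose proof (F_le1 F HF th).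
  destruct (Rlt_le_dec th 0) as [Hn|Hp].
  { assert (v = mu + 0); [|lra].
    apply (lim_eq Jb Ib th 0 0 v mu 0 HJl HIl).
    intros b Hb. assert (RS_int (fun x => x) F th 0 0).
    { apply RS_const; [lra|]. intros y Hy. rewrite (H0 th Hn).
      pose proof (Hm _ _ (proj2 Hy)). pose proof (F_nonneg F HF y). lra. }
    pose proof (RS_add _ _ _ _ _ _ _ _ H2 (HI b ltac:(lra)) (HJ b ltac:(lra))). lra. }
  destruct (Req_dec (F th) 0) as [E0|E0].
  { assert (mu = v + 0); [|lra].
    apply (lim_eq Ib Jb 0 th th mu v 0 HIl HJl).
    intros b Hb. assert (RS_int (fun x => x) F 0 th 0).
    { apply RS_const; [lra|]. intros y Hy. rewrite F0.
      pose proof (Hm _ _ (proj2 Hy)). pose proof (F_nonneg F HF y). lra. }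
    pose proof (RS_add _ _ _ _ _ _ _ _ H2 (HJ b ltac:(lra)) (HI b ltac:(lra))). lra. }
  destruct (Req_dec (F th) 1) as [E1|E1].
  { assert (v = 0 + 0); [|lra].
    apply (lim_eq Jb (fun _ => 0) th 0 th v 0 0 HJl).
    - intros eps He; exists 0; intros; rewrite Rminus_0_r, Rabs_R0; lra.
    - intros b Hb. assert (RS_int (fun x => x) F th b 0).
      { apply RS_const; [lra|]. intros y Hy. pose proof (Hm _ _ (proj1 Hy)). pose proof (F_le1 F HF y). lra. }
      pose proof (RS_uniq _ _ _ _ _ _ (HJ b ltac:(lra)) H2). lra. }
  assert (Hi : 0 < F th < 1) by lra. split; auto.
  assert (mu = v + mu * LC (F th)); [|lra].
  apply (lim_eq Ib Jb 0 th th mu v _ HIl HJl).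
  intros b Hb. pose proof (theta_lemma F Q th _ (Ib b) (Jb b) b HF HS HQ Hi ltac:(lra)
     (HL (F th) ltac:(lra)) (HI b ltac:(lra)) (HJ b ltac:(lra))). lra. Qed.

Lemma compare : forall F2 Q2 LC1 LC2 mu p1 p2 v, cont_cdf_nonneg F2 -> is_quantile F2 Q2 ->
  (forall p, 0 <= p < 1 -> RS_int Q2 (fun t => t) 0 p (mu * LC2 p)) -> mu > 0 ->
  (forall p, 0 <= p <= 1 -> LC1 p >= LC2 p) -> 0 < p1 < 1 -> 0 < p2 < 1 ->
  mu * LC1 p1 = v -> mu * LC2 p2 = v -> p1 <= p2.
Proof. intros F2 Q2 LC1 LC2 mu p1 p2 v HF HQ HL Hmu HLC Hp1 Hp2 E1 E2.
  destruct (Rle_lt_dec p1 p2); auto.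
  pose proof (Qint_strict F2 Q2 p1 p2 _ _ HF HQ ltac:(lra) r ltac:(lra) (HL p2 ltac:(lra)) (HL p1 ltac:(lra))).
  pose proof (HLC p1 ltac:(lra)). assert (mu * LC1 p1 >= mu * LC2 p1) by (apply Rle_ge, Rmult_le_compat_l; lra).
  lra. Qed.

Theorem mainTheorem3 :
  forall (F1 F2 : R -> R) (mu : R) (LC1 LC2 : R -> R),
    cont_cdf_nonneg F1 -> cont_cdf_nonneg F2 ->
    strict_incr_on_interior F1 -> strict_incr_on_interior F2 ->
    mu > 0 ->
    RS_int_infty (fun x => x) F1 0 mu ->
    RS_int_infty (fun x => x) F2 0 mu ->
    is_Lorenz_curve F1 mu LC1 -> is_Lorenz_curve F2 mu LC2 ->
    (forall p, 0 <= p <= 1 -> LC1 p >= LC2 p) ->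
    forall (m r tau1 tau2 theta1 theta2 : R),
      m > 1 -> 0 < r -> r < m * mu ->
      RS_int (fun x => x) F1 0 tau1 (r / m) ->
      RS_int (fun x => x) F2 0 tau2 (r / m) ->
      RS_int_infty (fun x => x) F1 theta1 (r / m) ->
      RS_int_infty (fun x => x) F2 theta2 (r / m) ->
      (F1 tau1 <= F2 tau2 /\ 1 - F1 theta1 >= 1 - F2 theta2) /\
      (/ m < 1 - F2 theta2 -> / m < 1 - F1 theta1) /\
      (/ m > F2 tau2 -> / m > F1 tau1).
Proof.
  intros F1 F2 mu LC1 LC2 HF1 HF2 HS1 HS2 Hmu HI1 HI2 HL1 HL2 HLC m r tau1 tau2 th1 th2
    Hm Hr Hrm Ht1 Ht2 Hth1 Hth2.
  destruct (quant_exists F1 HF1) as [Q1 HQ1]. destruct (quant_exists F2 HF2) as [Q2 HQ2].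
  destruct (HL1 Q1 HQ1) as [L1 _]. destruct (HL2 Q2 HQ2) as [L2 _].
  assert (Hv0 : 0 < r / m) by (apply Rdiv_lt_0_compat; lra).
  assert (Hvm : r / m < mu).
  { apply Rmult_lt_reg_r with m; [lra|]. unfold Rdiv; rewrite Rmult_assoc, Rinv_l; lra. }
  destruct (tau_part F1 Q1 LC1 mu tau1 _ HF1 HS1 HQ1 L1 HI1 Ht1 Hv0 Hvm) as [A1 B1].
  destruct (tau_part F2 Q2 LC2 mu tau2 _ HF2 HS2 HQ2 L2 HI2 Ht2 Hv0 Hvm) as [A2 B2].
  destruct (theta_part F1 Q1 LC1 mu th1 _ HF1 HS1 HQ1 L1 HI1 Hth1 Hv0 Hvm) as [C1 D1].
  destruct (theta_part F2 Q2 LC2 mu th2 _ HF2 HS2 HQ2 L2 HI2 Hth2 Hv0 Hvm) as [C2 D2].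
  pose proof (compare F2 Q2 LC1 LC2 mu _ _ _ HF2 HQ2 L2 Hmu HLC A1 A2 B1 B2).
  pose proof (compare F2 Q2 LC1 LC2 mu _ _ _ HF2 HQ2 L2 Hmu HLC C1 C2 D1 D2).
  split; [split|split]; intros; lra.
Qed.
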